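(* Let $n\ge 2$ and let $m,p,k$ be integers with $1\le m\le p\le k\le n$ and $p\le n-1$. Then the number of $\alpha\in\mathcal{OCT}_n$ with $h(\alpha)=p$, $f(\alpha)=m$ and $w^+(\alpha)=k$ is $$F(n;p,m,k)=\binom{n-m-1}{n-p-1}.$$
   Context: $X_n=\{1,2,\dots,n\}$ with its usual order; maps are written on the right ($x\alpha$). A map $\alpha:X_n\to X_n$ is order-preserving if $x\le y$ implies $x\alpha\le y\alpha$, and a contraction if $|x\alpha-y\alpha|\le|x-y|$ for all $x,y$. $\mathcal{OCT}_n$ is the set of all order-preserving contractions $X_n\to X_n$ (defined on all of $X_n$). For such $\alpha$: height $h(\alpha)=|\mathrm{Im}\,\alpha|$; right waist $w^+(\alpha)=\max(\mathrm{Im}\,\alpha)$; fix $f(\alpha)=|F(\alpha)|$ where $F(\alpha)=\{x\in X_n:x\alpha=x\}$. *)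

(* Defs.v *)
(* X_n = {1,..,n} is modelled by 'I_n, the element i : 'I_n
   standing for i+1. Shifting by 1 preserves order, distances and fixed points;
   the right waist is max(Im) read back in X_n, i.e. (max of values) + 1. *)
From mathcomp Require Import all_boot all_order.
Set Implicit Arguments. Unset Strict Implicit. Unset Printing Implicit Defensive.

Definition ndist (x y : nat) : nat := (x - y) + (y - x).

Definition order_preserving n (a : {ffun 'I_n -> 'I_n}) : bool :=
  [forall x : 'I_n, forall y : 'I_n, (x <= y) ==> (a x <= a y)].

Definition contraction n (a : {ffun 'I_n -> 'I_n}) : bool :=
  [forall x : 'I_n, forall y : 'I_n, ndist (a x) (a y) <= ndist x y].

Definition inOCT n (a : {ffun 'I_n -> 'I_n}) : bool :=
  order_preserving a && contraction a.

Definition height n (a : {ffun 'I_n -> 'I_n}) : nat := #|[set a x | x : 'I_n]|.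

Definition rwaist n (a : {ffun 'I_n -> 'I_n}) : nat := \max_(x : 'I_n) (a x).+1.

Definition fixn n (a : {ffun 'I_n -> 'I_n}) : nat := #|[set x : 'I_n | a x == x]|.

(* Main.v *)
Require Import Defs.
From mathcomp Require Import all_boot all_order.
From mathcomp Require Import zify.
Set Implicit Arguments. Unset Strict Implicit. Unset Printing Implicit Defensive.

Definition steps (L : nat) (f : nat -> nat) :=
  forall i, i.+1 < L -> f i.+1 = f i \/ f i.+1 = (f i).+1.

Lemma steps_mono L f : steps L f -> forall i j, i <= j -> j < L -> f i <= f j.
Proof.
move=> H i j; elim: j => [|j IH] ij jL.
  by have -> : i = 0 by lia.
case: (ltngtP i j.+1) => [ij'|?|<-//]; last lia.
have := IH ij' (ltnW jL); case: (H j jL) => ->; lia.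
Qed.

Lemma steps_le L f : steps L f -> forall i j, i <= j -> j < L -> f j <= f i + (j - i).
Proof.
move=> H i j; elim: j => [|j IH] ij jL.
  have -> : i = 0 by lia. lia.
case: (ltngtP i j.+1) => [ij'|?|<-]; [|lia|by rewrite subnn addn0].
have := IH ij' (ltnW jL); case: (H j jL) => ->; lia.
Qed.

Lemma steps_lt L L' f : steps L f -> L' <= L -> steps L' f.
Proof. by move=> H h i hi; apply: H; lia. Qed.

Lemma threshold0 L f c : steps L f ->
  exists u, u <= L /\ (forall x, x < L -> (f x < c) = (x < u)).
Proof.
elim: L => [|L IH] H; first by exists 0; split=> // x.
have [u [uL hu]] := IH (steps_lt H (leqnSn L)).
case: (ltngtP u L) => [uL'|?|uE]; last first.
- case hL: (f L < c).
  + exists L.+1; split=> // x xL; case: (ltngtP x L) => [xL'|?|->].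
    * rewrite hu //; lia.
    * lia.
    * by rewrite hL; lia.
  + exists L; split=> // x xL; case: (ltngtP x L) => [xL'|?|->].
    * by rewrite hu // uE.
    * lia.
    * by rewrite hL; lia.
- lia.
- exists u; split; first lia.
  move=> x xL; case: (ltngtP x L) => [xL'|?|->]; first by rewrite hu.
  + lia.
  + have h1 := hu L.-1 ltac:(lia).
    have h2 := steps_mono H (leq_pred L) (ltnSn L).
    have : ~~ (f L.-1 < c) by rewrite h1; lia.
    lia.
Qed.

Lemma threshold L f c : steps L f -> f 0 <= c ->
  exists u, [/\ u <= L, (forall x, x < L -> (f x < c) = (x < u)) & (u < L -> f u = c)].
Proof.
move=> H h0; have [u [uL hu]] := threshold0 c H.
exists u; split=> // uL'.
case: u uL hu uL' => [|u] uL hu uL'.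
  have : c <= f 0 by rewrite leqNgt hu // ltnn.
  lia.
have h1 : f u < c by rewrite hu //; lia.
have h2 : c <= f u.+1 by rewrite leqNgt hu // ltnn.
case: (H u uL') => E; lia.
Qed.

Lemma card_interval N lo hi : hi <= N -> #|[set x : 'I_N | lo <= x < hi]| = hi - lo.
Proof.
move=> hN.
rewrite -sum1_card big_mkcond /=.
have -> : \sum_(i < N) (if i \in [set x : 'I_N | lo <= x < hi] then 1 else 0)
   = \sum_(i < N) ((lo <= i < hi) : nat).
  by apply: eq_bigr => i _; rewrite inE; case: (_ && _).
rewrite -(big_mkord xpredT (fun i => ((lo <= i < hi) : nat))).
suff : forall N, \sum_(0 <= i < N) ((lo <= i < hi) : nat) = minn N hi - lo.
  by move=> ->; rewrite (minn_idPr hN).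
elim=> [|K IH]; first by rewrite big_nil min0n.
rewrite big_nat_recr //= IH; case: (leqP lo K) => h1; case: (ltnP K hi) => h2 /=; lia.
Qed.


Section QBsec.
Variable L' : nat.

Definition bn (B : {set 'I_L'}) (i : nat) : bool := [exists b in B, val b == i].
Definition QB (B : {set 'I_L'}) (y : nat) : nat := \sum_(i < y) bn B i.
Definition BQ (Q : nat -> nat) : {set 'I_L'} := [set i : 'I_L' | Q i.+1 == (Q i).+1].

Lemma QBS B y : QB B y.+1 = QB B y + bn B y.
Proof. by rewrite /QB big_ord_recr. Qed.

Lemma QB0 B : QB B 0 = 0.
Proof. by rewrite /QB big_ord0. Qed.

Lemma QB_steps B L : steps L (QB B).
Proof. by move=> i _; rewrite QBS; case: (bn B i); [right; rewrite addn1|left; rewrite addn0]. Qed.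

Lemma bn_ord B (i : 'I_L') : bn B i = (i \in B).
Proof.
apply/existsP/idP => [[b /andP [bB /eqP /val_inj <-]] //|iB].
by exists i; rewrite iB eqxx.
Qed.

Lemma QB_card B : QB B L' = #|B|.
Proof.
rewrite /QB -sum1_card [in RHS]big_mkcond /=; apply: eq_bigr => i _.
by rewrite bn_ord; case: (i \in B).
Qed.

Lemma bn_BQ Q i : bn (BQ Q) i = (i < L') && (Q i.+1 == (Q i).+1).
Proof.
apply/existsP/andP => [[b /andP [bB /eqP <-]]|[iL hQ]].
  by rewrite inE in bB; split=> //; apply: ltn_ord.
by exists (Ordinal iL); rewrite inE /= hQ eqxx.
Qed.

Lemma QB_BQ Q : steps L'.+1 Q -> Q 0 = 0 -> forall y, y <= L' -> QB (BQ Q) y = Q y.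
Proof.
move=> H h0; elim=> [|y IH] yL; first by rewrite QB0 h0.
rewrite QBS IH; last lia.
rewrite bn_BQ (_ : y < L') //=.
case: (H y ltac:(lia)) => ->; last by rewrite eqxx addn1.
by rewrite (_ : (Q y == (Q y).+1) = false) ?addn0 //; apply: negbTE; lia.
Qed.

Lemma BQ_QB B : BQ (QB B) = B.
Proof.
apply/setP => i; rewrite inE QBS bn_ord.
case: (i \in B); first by rewrite addn1 eqxx.
by rewrite addn0; apply: negbTE; lia.
Qed.

Lemma card_BQ Q : steps L'.+1 Q -> Q 0 = 0 -> #|BQ Q| = Q L'.
Proof. by move=> H h0; rewrite -QB_card QB_BQ. Qed.

Lemma BQ_ext Q1 Q2 : (forall y, y <= L' -> Q1 y = Q2 y) -> BQ Q1 = BQ Q2.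
Proof.
move=> h; apply/setP => i; rewrite !inE !h //; have := ltn_ord i; lia.
Qed.
End QBsec.


Definition Q_of_P (m c : nat) (P : nat -> nat) (y : nat) : nat :=
  if P y < c then P y else (P (y + m)).-1.

Definition P_of_Q (M m c : nat) (Q : nat -> nat) (x : nat) : nat :=
  if (x < M) && (Q x < c) then Q x
  else if (m <= x) && (c <= Q (x - m)) then (Q (x - m)).+1 else c.

Lemma P_of_Q_ext M m c Q1 Q2 : (forall y, y < M -> Q1 y = Q2 y) ->
  forall x, x < M + m -> P_of_Q M m c Q1 x = P_of_Q M m c Q2 x.
Proof.
move=> h x xM; rewrite /P_of_Q.
have e2 : (m <= x) && (c <= Q1 (x - m)) = (m <= x) && (c <= Q2 (x - m)).
  by case: (leqP m x) => hm //=; rewrite h //; lia.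
rewrite e2; case: (leqP m x) => hm /=; case: (ltnP x M) => hx /=; rewrite ?h //; lia.
Qed.

Lemma QP_stage (M m c s : nat) (Q : nat -> nat) :
  steps M Q -> Q 0 = 0 -> Q M.-1 = s -> c <= s.+1 -> 0 < M -> 0 < m ->
  [/\ steps (M + m) (P_of_Q M m c Q), P_of_Q M m c Q 0 = 0,
      P_of_Q M m c Q (M + m).-1 = s.+1,
      #|[set x : 'I_(M + m) | P_of_Q M m c Q x == c]| = m &
      forall y, y < M -> Q_of_P m c (P_of_Q M m c Q) y = Q y].
Proof.
move=> H h0 hs hc M0 m0.
have [u [uM hu hQu]] := threshold (c:=c) H (ltac:(rewrite h0; lia) : Q 0 <= c).
have hQu1 : 0 < u -> Q u.-1 = c.-1.
  move=> u0; have h1 : Q u.-1 < c by rewrite hu; lia.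
  case: (ltngtP u M) => [uM'|?|uE]; last 2 first.
  - lia.
  - rewrite uE hs; rewrite uE hs in h1; lia.
  have h2 := hQu uM'.
  have := H u.-1 ltac:(lia); rewrite prednK //; lia.
set P := P_of_Q M m c Q.
have hP : forall x, x < M + m ->
    P x = if x < u then Q x else if x < u + m then c else (Q (x - m)).+1.
  move=> x xM; rewrite /P /P_of_Q.
  case: (ltnP x u) => hxu.
    have xM' : x < M by lia. by rewrite xM' /= (hu x xM') hxu.
  have hx1 : (x < M) && (Q x < c) = false.
    case: (ltnP x M) => //= hxM; rewrite hu //; lia.
  rewrite hx1; case: (ltnP x (u + m)) => hxu2.
    case: (leqP m x) => //= hmx. have h3 : Q (x - m) < c by rewrite hu; lia.
    by rewrite leqNgt h3.
  have hmx : m <= x by lia. have h3 : c <= Q (x - m) by rewrite leqNgt hu; lia.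
  by rewrite hmx h3.
have hQge : forall y, u <= y -> y < M -> c <= Q y.
  by move=> y h1 h2; rewrite leqNgt hu //; lia.
have hQlt : forall y, y < u -> Q y < c.
  by move=> y h1; rewrite hu //; lia.
split.
- move=> i iM; rewrite !hP //; try lia.
  case: (ltnP i.+1 u) => h1.
    rewrite (_ : i < u) //; last lia. by apply: H; lia.
  case: (ltnP i u) => h2.
    rewrite (_ : i.+1 < u + m = true); last lia.
    have e : Q i = c.-1.
      have -> : i = u.-1 by lia.
      apply: hQu1; lia.
    have := hQlt i h2; right; lia.
  case: (ltnP i.+1 (u + m)) => h3.
    by rewrite (_ : i < u + m) //; [left | lia].
  case: (ltnP i (u + m)) => h4.
    have -> : i.+1 - m = u by lia.
    right; rewrite hQu //; lia.
  have -> : i.+1 - m = (i - m).+1 by lia.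
  case: (H (i - m) ltac:(lia)) => ->; [left|right] => //.
- rewrite hP //; last lia.
  case: (ltnP 0 u) => h1; first by rewrite h0.
  have hc0 : c <= Q 0 by rewrite leqNgt hu //; lia.
  rewrite (_ : 0 < u + m = true); last lia.
  lia.
- rewrite hP; last lia.
  case: (ltngtP u M) => [uM'|?|uE].
  + rewrite (_ : (M + m).-1 < u = false); last lia.
    rewrite (_ : (M + m).-1 < u + m = false); last lia.
    by rewrite (_ : (M + m).-1 - m = M.-1) ?hs //; lia.
  + lia.
  + rewrite (_ : (M + m).-1 < u = false); last lia.
    rewrite (_ : (M + m).-1 < u + m); last lia.
    have : Q M.-1 < c by rewrite hu; lia.
    lia.
- transitivity (u + m - u); last lia.
  rewrite -(card_interval u (ltac:(lia) : u + m <= M + m)).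
  apply: eq_card => x; rewrite !inE hP //.
  case: (ltnP x u) => h1.
    have := hQlt x h1; rewrite /=; lia.
  case: (ltnP x (u + m)) => h2; first by rewrite eqxx.
  have := hQge (x - m) ltac:(lia) ltac:(have := ltn_ord x; lia); lia.
- move=> y yM; rewrite /Q_of_P !hP //; try lia.
  case: (ltnP y u) => h1; first by rewrite hQlt.
  case: (ltnP y (u + m)) => h2; first rewrite ltnn.
  + rewrite (_ : y + m < u = false); last lia.
    rewrite (_ : y + m < u + m = false); last lia.
    by rewrite addnK.
  + rewrite ltnNge (_ : c <= (Q (y - m)).+1) //=; last by have := hQge (y - m); lia.
    rewrite (_ : y + m < u = false); last lia.
    rewrite (_ : y + m < u + m = false); last lia.
    by rewrite addnK.
Qed.

Lemma PQ_stage (N m c s : nat) (P : nat -> nat) :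
  steps N P -> P 0 = 0 -> P N.-1 = s.+1 -> c <= s.+1 -> 0 < m -> m < N ->
  #|[set x : 'I_N | P x == c]| = m ->
  [/\ steps (N - m) (Q_of_P m c P), Q_of_P m c P 0 = 0,
      Q_of_P m c P (N - m).-1 = s &
      forall x, x < N -> P_of_Q (N - m) m c (Q_of_P m c P) x = P x].
Proof.
move=> H h0 hs hc m0 mN hcard.
have [u [uN hu hPu]] := threshold (c:=c) H (ltac:(rewrite h0; lia) : P 0 <= c).
have [v [vN hv hPv]] := threshold (c:=c.+1) H (ltac:(rewrite h0; lia) : P 0 <= c.+1).
have uv : u <= v.
  case: (leqP u v) => // vu.
  have := hu v ltac:(lia); have := hv v ltac:(lia); lia.
have hvu : v = u + m.
  suff e : [set x : 'I_N | P x == c] = [set x : 'I_N | u <= x < v].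
    by rewrite e card_interval // in hcard; lia.
  apply/setP => x; rewrite !inE.
  have h1 := hu x (ltn_ord x); have h2 := hv x (ltn_ord x).
  lia.
have hlt : forall x, x < u -> P x < c by move=> x h; rewrite hu //; lia.
have hmid : forall x, u <= x -> x < v -> P x = c.
  by move=> x h1 h2; have := hu x ltac:(lia); have := hv x ltac:(lia); lia.
have hge : forall x, v <= x -> x < N -> c.+1 <= P x.
  by move=> x h1 h2; rewrite leqNgt hv //; lia.
have hQ : forall y, y < N - m -> Q_of_P m c P y = if y < u then P y else (P (y + m)).-1.
  move=> y yN; rewrite /Q_of_P; case: (ltnP y u) => h; first by rewrite hlt.
  have := hu y ltac:(lia); case: (P y < c); lia.
have hPu1 : 0 < u -> P u.-1 = c.-1.
  move=> u0; have a1 := hlt u.-1 ltac:(lia).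
  case: (ltnP u N) => uN'.
    have a2 := hPu uN'; case: (H u.-1 ltac:(lia)); rewrite prednK //; lia.
  have uE : u = N by lia.
  have : c <= P N.-1 by rewrite hs.
  rewrite uE in a1; lia.
split.
- move=> i iN; rewrite !hQ //; try lia.
  case: (ltnP i.+1 u) => h1.
    by rewrite (_ : i < u) //; [apply: H; lia | lia].
  case: (ltnP i u) => h2.
    have e : P i = c.-1.
      have -> : i = u.-1 by lia.
      apply: hPu1; lia.
    have hv1 : P v = c.+1 by apply: hPv; lia.
    have a1 := hlt i h2.
    right; have -> : i.+1 + m = v by lia.
    lia.
  have -> : i.+1 + m = (i + m).+1 by lia.
  have := hge (i + m) ltac:(lia) ltac:(lia).
  case: (H (i + m) ltac:(lia)) => ->; lia.
- rewrite hQ; last lia.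
  case: (ltnP 0 u) => h1; first by rewrite h0.
  have := hu 0 ltac:(lia); have := hPv ltac:(lia); rewrite h0 add0n.
  have -> : v = m by lia.
  lia.
- rewrite hQ; last lia.
  case: (ltnP (N - m).-1 u) => h1.
    have hu0 := hPu1 ltac:(lia).
    have -> : (N - m).-1 = u.-1 by lia.
    have := hv N.-1 ltac:(lia); rewrite hs; lia.
  have -> : (N - m).-1 + m = N.-1 by lia.
  by rewrite hs.
- move=> x xN; rewrite /P_of_Q.
  case: (ltnP x u) => h1.
    have xM : x < N - m by lia.
    by rewrite xM hQ // h1 hlt.
  have f1 : (x < N - m) && (Q_of_P m c P x < c) = false.
    case: (ltnP x (N - m)) => //= h3.
    rewrite hQ //; rewrite (_ : x < u = false); last lia.
    have := hge (x + m) ltac:(lia) ltac:(lia); lia.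
  rewrite f1; case: (ltnP x v) => h2.
    have f2 : (m <= x) && (c <= Q_of_P m c P (x - m)) = false.
      case: (leqP m x) => //= h3.
      rewrite hQ; last lia.
      rewrite (_ : x - m < u); last lia.
      have := hlt (x - m) ltac:(lia); lia.
    by rewrite f2 hmid.
  have f2 : (m <= x) && (c <= Q_of_P m c P (x - m)) = true.
    rewrite (_ : m <= x) /=; last lia.
    rewrite hQ; last lia.
    rewrite (_ : x - m < u = false); last lia.
    rewrite subnK; last lia.
    have := hge x h2 xN; lia.
  rewrite f2 hQ; last lia.
  rewrite (_ : x - m < u = false); last lia.
  rewrite subnK; last lia.
  have := hge x h2 xN; lia.
Qed.


Section Ffun.
Variable n' : nat.
Local Notation n := n'.+1.
Implicit Types a : {ffun 'I_n -> 'I_n}.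

Definition Af a (x : nat) : nat := a (inord x).
Definition P_of_a a x := Af a 0 + x - Af a x.
Definition a_of_P (c : nat) (P : nat -> nat) : {ffun 'I_n -> 'I_n} :=
  [ffun x : 'I_n => inord (c + x - P x)].

Lemma Af_val a (x : 'I_n) : Af a x = a x.
Proof. by rewrite /Af inord_val. Qed.

Lemma Af_lt a x : Af a x < n.
Proof. exact: ltn_ord. Qed.

Lemma OCT_steps a : inOCT a -> steps n (Af a).
Proof.
case/andP => /forallP op /forallP ct i iN.
have h1 := op (inord i); move/forallP: h1 => /(_ (inord i.+1)).
have h2 := ct (inord i); move/forallP: h2 => /(_ (inord i.+1)).
rewrite /ndist !inordK //; try lia.
rewrite /Af; lia.
Qed.

Lemma steps_OCT a : steps n (Af a) -> inOCT a.
Proof.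
move=> H; apply/andP; split; apply/forallP => x; apply/forallP => y.
  apply/implyP => xy; rewrite -!Af_val; apply: steps_mono H _ _ xy _; exact: ltn_ord.
rewrite /ndist -!Af_val.
case: (leqP x y) => xy.
  have h1 := steps_mono H xy (ltn_ord y); have h2 := steps_le H xy (ltn_ord y); lia.
have xy' : y <= x by lia.
have h1 := steps_mono H xy' (ltn_ord x); have h2 := steps_le H xy' (ltn_ord x); lia.
Qed.

Lemma height_OCT a : inOCT a -> height a = (Af a n').+1 - Af a 0.
Proof.
move=> /OCT_steps H.
rewrite /height -(card_interval (Af a 0) (Af_lt a n')).
apply: eq_card => y; rewrite !inE.
apply/imsetP/idP.
  case=> x _ ->; rewrite -Af_val.
  have h1 := steps_mono H (leq0n x) (ltn_ord x).
  have h2 := steps_mono H (ltnSE (ltn_ord x)) (ltnSn n').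
  lia.
move=> /andP [h1 h2].
have [u [uN hu hfu]] := threshold (c:=y) H h1.
have uN' : u < n by have := hu n' (ltnSn n'); lia.
exists (inord u) => //; apply: val_inj; rewrite /= -(hfu uN') /Af //.
Qed.

Lemma rwaist_OCT a : inOCT a -> rwaist a = (Af a n').+1.
Proof.
move=> /OCT_steps H; rewrite /rwaist; apply/eqP; rewrite eqn_leq; apply/andP; split.
  apply/bigmax_leqP => x _; rewrite -Af_val ltnS.
  apply: (steps_mono (i:=x) (j:=n') H); [exact: ltnSE (ltn_ord x)|exact: ltnSn].
exact: (leq_bigmax (F := fun x : 'I_n => (a x).+1) (inord n')).
Qed.

Lemma fixn_OCT a : inOCT a -> fixn a = #|[set x : 'I_n | P_of_a a x == Af a 0]|.
Proof.
move=> /OCT_steps H; rewrite /fixn; apply: eq_card => x; rewrite !inE /P_of_a.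
have h := steps_le H (leq0n x) (ltn_ord x).
rewrite Af_val subn0 in h; rewrite Af_val.
apply/eqP/eqP => e.
  rewrite e; lia.
apply: val_inj => /=; lia.
Qed.
End Ffun.

Lemma Af_a_of_P n' c (P : nat -> nat) :
  (forall x, x < n'.+1 -> c + x - P x < n'.+1) ->
  forall x, x < n'.+1 -> Af (a_of_P n' c P) x = c + x - P x.
Proof.
move=> hb x xn; rewrite /Af /a_of_P ffunE inordK // inordK //; exact: hb.
Qed.


Lemma Q_of_P_ext m c P1 P2 y : P1 y = P2 y -> P1 (y + m) = P2 (y + m) ->
  Q_of_P m c P1 y = Q_of_P m c P2 y.
Proof. by rewrite /Q_of_P => -> ->. Qed.

Theorem proposition2p3 (n m p k : nat) :
  2 <= n -> 1 <= m -> m <= p -> p <= k -> k <= n -> p <= n - 1 ->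
  #|[set a : {ffun 'I_n -> 'I_n} |
      [&& inOCT a, height a == p, fixn a == m & rwaist a == k]]|
  = 'C(n - m - 1, n - p - 1).
Proof.
move=> h2 h1m hmp hpk hkn hpn.
destruct n as [|n']; first lia.
set c := k - p.
set s := n'.+1 - p - 1.
set L' := n'.+1 - m - 1.
set M := n'.+1 - m.
have eM : M = L'.+1 by rewrite /M /L'; lia.
have eMm : M + m = n'.+1 by rewrite /M; lia.
pose F (B : {set 'I_L'}) := a_of_P n' c (P_of_Q M m c (QB B)).
pose E (a : {ffun 'I_n'.+1 -> 'I_n'.+1}) := BQ L' (Q_of_P m c (P_of_a a)).
have FB : forall B : {set 'I_L'}, #|B| = s ->
    [&& inOCT (F B), height (F B) == p, fixn (F B) == m & rwaist (F B) == k]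
    /\ E (F B) = B.
  move=> B hB.
  have hQs : steps M (QB B) by apply: QB_steps.
  have hQ0 : QB B 0 = 0 by apply: QB0.
  have hQe : QB B M.-1 = s by rewrite eM /= QB_card.
  have hcs : c <= s.+1 by rewrite /c /s; lia.
  have hM0 : 0 < M by rewrite /M; lia.
  have [hPs hP0 hPe hPc hPr] := QP_stage hQs hQ0 hQe hcs hM0 h1m.
  rewrite eMm in hPs hPe hPc.
  set P := P_of_Q M m c (QB B) in hPs hP0 hPe hPc hPr *.
  have hPx : forall x, x < n'.+1 -> P x <= x.
    by move=> x xn; have := steps_le hPs (leq0n x) xn; rewrite hP0; lia.
  have hPn : forall x, x < n'.+1 -> P n'.+1.-1 <= P x + (n'.+1.-1 - x).
    by move=> x xn; apply: (steps_le (i:=x) (j:=n') hPs); lia.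
  have hb : forall x, x < n'.+1 -> c + x - P x < n'.+1.
    by move=> x xn; have := hPn x xn; have := hPx x xn; rewrite hPe /c /s; lia.
  have hA := Af_a_of_P hb.
  have hAs : steps n'.+1 (Af (F B)).
    move=> i iN; rewrite /F !hA //; try lia.
    have := hPx i ltac:(lia); case: (hPs i iN) => ->; lia.
  have hoct := steps_OCT hAs.
  have hA0 : Af (F B) 0 = c by rewrite hA // hP0; lia.
  have hPaP : forall x, x < n'.+1 -> P_of_a (F B) x = P x.
    by move=> x xn; rewrite /P_of_a hA0 hA //; have := hPx x xn; lia.
  split.
    rewrite hoct /= height_OCT // rwaist_OCT // fixn_OCT //.
    rewrite hA // hA0 /=.
    have e1 : P n' = s.+1 by rewrite -hPe.
    rewrite e1.
    have -> : #|[set x : 'I_n'.+1 | P_of_a (F B) x == c]| = m.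
      rewrite -hPc; apply: eq_card => x; rewrite !inE hPaP //.
    rewrite /c /s; apply/and3P; split; apply/eqP; lia.
  rewrite /E -[RHS](BQ_QB B); apply: BQ_ext => y yL.
  rewrite -hPr; last lia.
  apply: Q_of_P_ext; apply: hPaP; lia.
have EA : forall a : {ffun 'I_n'.+1 -> 'I_n'.+1},
    [&& inOCT a, height a == p, fixn a == m & rwaist a == k] ->
    #|E a| = s /\ F (E a) = a.
  move=> a /and4P [hoct /eqP hh /eqP hf /eqP hr].
  rewrite height_OCT // in hh; rewrite rwaist_OCT // in hr.
  rewrite fixn_OCT // in hf.
  have hAs := OCT_steps hoct.
  have hA0 : Af a 0 = c by rewrite /c; lia.
  rewrite hA0 in hf.
  have hAx : forall x, x < n'.+1 -> Af a x <= Af a 0 + x.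
    by move=> x xn; have := steps_le hAs (leq0n x) xn; lia.
  set P := P_of_a a in hf *.
  have hPs : steps n'.+1 P.
    move=> i iN; rewrite /P /P_of_a.
    have := hAx i ltac:(lia); case: (hAs i iN) => ->; lia.
  have hP0 : P 0 = 0 by rewrite /P /P_of_a; lia.
  have hPe : P n'.+1.-1 = s.+1 by rewrite /P /P_of_a /= hA0 /c /s; lia.
  have hcs : c <= s.+1 by rewrite /c /s; lia.
  have hmN : m < n'.+1 by lia.
  have [hQs hQ0 hQe hQr] := PQ_stage hPs hP0 hPe hcs h1m hmN hf.
  set Q := Q_of_P m c P in hQs hQ0 hQe hQr *.
  have hQs' : steps L'.+1 Q by rewrite -eM.
  have hQB : forall y, y < M -> QB (BQ L' Q) y = Q y.
    by move=> y yM; apply: QB_BQ => //; lia.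
  split.
    rewrite /E -/P -/Q card_BQ //.
    by rewrite -hQe /M; congr Q; lia.
  apply/ffunP => x; apply: val_inj.
  rewrite /E -/P -/Q /F /a_of_P ffunE /=.
  rewrite (P_of_Q_ext (m:=m) c hQB); last by rewrite eMm.
  rewrite hQr // inordK.
    rewrite /P /P_of_a hA0 -Af_val; have := hAx x (ltn_ord x); lia.
  rewrite /P /P_of_a hA0; have := hAx x (ltn_ord x); have := Af_lt a x; lia.
have cd := card_draws 'I_L' s; rewrite card_ord in cd.
rewrite -cd.
have -> : [set a : {ffun 'I_n'.+1 -> 'I_n'.+1} |
      [&& inOCT a, height a == p, fixn a == m & rwaist a == k]]
    = F @: [set B : {set 'I_L'} | #|B| == s].
  apply/setP => a; rewrite inE; apply/idP/imsetP.
    move=> ha; have [e1 e2] := EA a ha.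
    by exists (E a); rewrite ?inE ?e1 ?e2.
  by case=> B; rewrite inE => /eqP hB ->; have [] := FB B hB.
apply: card_in_imset => B1 B2; rewrite !inE => /eqP hb1 /eqP hb2 e.
have [_ e1] := FB B1 hb1; have [_ e2] := FB B2 hb2.
by rewrite -e1 -e2 e.
Qed.
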